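(* Let $\Pi_1,\Pi_2$ be programs (not necessarily safe) over a function-free signature $\mathcal L$. Then $\Pi_1\equiv_u^{\mathcal E}\Pi_2$ if and only if $\Pi_1\equiv_u^{\mathcal H}\Pi_2$.
   Context: $\mathcal L=\langle\mathcal F,\mathcal P\rangle$ is a function-free first-order signature without equality ($\mathcal F$ consists of object constants). A rule has the form $a_1\vee\dots\vee a_k\vee\neg a_{k+1}\vee\dots\vee\neg a_l\leftarrow b_1,\dots,b_m,\neg b_{m+1},\dots,\neg b_n$ with atoms possibly containing variables, $l\ge k\ge0$, $n\ge m\ge0$, $l+n>0$; a program is a set of rules. A fact is a rule with empty body; a factual program is a set of facts. A rule is identified with the sentence $\forall\vec x(\beta_r\to\alpha_r)$ ($\alpha_r$ the disjunction of head literals, $\bot$ if empty; $\beta_r$ the conjunction of body literals, $\top$ if empty; $\neg p$ read as $p\to\bot$), a program with the theory of its rules. For a universe $\mathcal U$, $\mathcal C_{\mathcal U}=\{c_\varepsilon\}$ are fresh names and $\mathrm{At}(\mathcal P,\mathcal U)$ the atoms over $\mathcal P$ and $\mathcal C_{\mathcal U}$. A QHT-interpretation is $\langle I,J,K\rangle$ with $I$ interpreting the constants on $\mathcal U$ and $J\subseteq K\subseteq\mathrm{At}(\mathcal P,\mathcal U)$. Satisfaction by $M=\langle I,J,K\rangle$: $M\models p(t_1,..,t_n)$ iff $p(c_{t_1^I},..,c_{t_n^I})\in J$; $M\not\models\bot$; $\wedge,\vee$ componentwise; $M\models\phi\to\psi$ iff ($M\not\models\phi$ or $M\models\psi$) and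 $\langle I,K\rangle\models\phi\to\psi$ classically ($\langle I,K\rangle$ makes exactly $K$ true); $M\models\forall x\phi(x)$ iff $M\models\phi(c_\varepsilon)$ and $\langle I,K\rangle\models\phi(c_\varepsilon)$ for all $\varepsilon$; $M\models\exists x\phi(x)$ iff $M\models\phi(c_\varepsilon)$ for some $\varepsilon$. For a program $\Pi$ over a function-free signature $\mathcal L'$: an extended Herbrand interpretation is one on a universe $\mathcal U$ containing the constants of $\mathcal L'$ that interprets every constant as itself; $\langle I,K\rangle$ is an open answer set of $\Pi$ iff it is an extended Herbrand interpretation with $\langle I,K,K\rangle\models\Pi$ and $\langle I,J,K\rangle\not\models\Pi$ for every $J\subsetneq K$. The Herbrand universe $\mathcal H$ is the set of constants of $\mathcal L'$ (a single arbitrary constant if there are none); an ordinary answer set is defined in the same way but with universe exactly $\mathcal H$ and constants interpreted by identity. $\Pi_1\equiv_u^{\mathcal E}\Pi_2$ (resp. $\Pi_1\equiv_u^{\mathcal H}\Pi_2$) iff for every function-free $\mathcal L'\supseteq\mathcal L$ and every factual program $\Pi$ over $\mathcal L'$, $\Pi_1\cup\Pi$ and $\Pi_2\cup\Pi$ have the same open (resp. ordinary) answer sets over $\mathcal L'$. *)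

(* Defs.v *)
From Stdlib Require Import List.
Import ListNotations.

Set Implicit Arguments.
Unset Strict Implicit.

Record signature := mkSig {
  Cst : Type;
  Prd : Type;
  ar  : Prd -> nat }.

Inductive term (C : Type) : Type :=
| Var (x : nat)
| Con (c : C).
Arguments Var {C} x.
Arguments Con {C} c.

Record atom (S : signature) := mkAtom {
  apred : Prd S;
  aargs : list (term (Cst S));
  aok   : length aargs = @ar S apred }.

(** Rule  hpos_1 v ... v hpos_k v ~hneg_1 v ... <- bpos_1,...,bpos_m, ~bneg_1,... *)
Record rule (S : signature) := mkRule {
  hpos : list (atom S);
  hneg : list (atom S);
  bpos : list (atom S);
  bneg : list (atom S) }.

Definition is_rule (S : signature) (r : rule S) : Prop :=
  length (hpos r) + length (hneg r) + length (bpos r) + length (bneg r) > 0.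

Definition is_fact (S : signature) (r : rule S) : Prop :=
  is_rule r /\ bpos r = [] /\ bneg r = [].

Definition program (S : signature) := rule S -> Prop.

Definition is_program (S : signature) (P : program S) : Prop :=
  forall r, P r -> is_rule r.

Definition is_factual (S : signature) (P : program S) : Prop :=
  forall r, P r -> is_fact r.

Definition punion (S : signature) (P Q : program S) : program S :=
  fun r => P r \/ Q r.

Inductive form (S : signature) : Type :=
| FAtom (a : atom S)
| FBot
| FAnd (f g : form S)
| FOr  (f g : form S)
| FImp (f g : form S)
| FAll (x : nat) (f : form S)
| FEx  (x : nat) (f : form S).
Arguments FBot {S}.

Definition FTop {S : signature} : form S := FImp FBot FBot.
Definition FNeg {S : signature} (f : form S) : form S := FImp f FBot.

Fixpoint bigand {S : signature} (l : list (form S)) : form S :=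
  match l with
  | [] => FTop
  | [f] => f
  | f :: l' => FAnd f (bigand l')
  end.

Fixpoint bigor {S : signature} (l : list (form S)) : form S :=
  match l with
  | [] => FBot
  | [f] => f
  | f :: l' => FOr f (bigor l')
  end.

Definition term_vars {C : Type} (t : term C) : list nat :=
  match t with Var x => [x] | Con _ => [] end.

Definition atom_vars {S : signature} (a : atom S) : list nat :=
  flat_map term_vars (aargs a).

Definition rule_vars {S : signature} (r : rule S) : list nat :=
  flat_map atom_vars (hpos r ++ hneg r ++ bpos r ++ bneg r).

Definition rule_form {S : signature} (r : rule S) : form S :=
  fold_right (fun x f => FAll x f)
    (FImp (bigand (map (@FAtom S) (bpos r) ++ map (fun a => FNeg (FAtom a)) (bneg r)))
          (bigor  (map (@FAtom S) (hpos r) ++ map (fun a => FNeg (FAtom a)) (hneg r))))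
    (rule_vars r).

(** Ground atoms At(P,U): predicate applied to elements of the universe U
    (i.e. to the names c_eps). *)
Record gatom (S : signature) (U : Type) := mkGAtom {
  gpred : Prd S;
  gargs : list U;
  gok   : length gargs = @ar S gpred }.

Section Semantics.
Variables (S : signature) (U : Type) (I : Cst S -> U).

Definition eval_term (s : nat -> U) (t : term (Cst S)) : U :=
  match t with Var x => s x | Con c => I c end.

Definition eval_atom (s : nat -> U) (a : atom S) : gatom S U :=
  @mkGAtom S U (apred a) (map (eval_term s) (aargs a))
    (eq_trans (length_map _ _) (aok a)).

Definition upd (s : nat -> U) (x : nat) (u : U) : nat -> U :=
  fun y => if Nat.eqb y x then u else s y.

Fixpoint csat (K : gatom S U -> Prop) (s : nat -> U) (f : form S) : Prop :=
  match f with
  | FAtom a => K (eval_atom s a)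
  | FBot => False
  | FAnd f g => csat K s f /\ csat K s g
  | FOr f g => csat K s f \/ csat K s g
  | FImp f g => csat K s f -> csat K s g
  | FAll x f => forall u, csat K (upd s x u) f
  | FEx x f => exists u, csat K (upd s x u) f
  end.

Fixpoint htsat (J K : gatom S U -> Prop) (s : nat -> U) (f : form S) : Prop :=
  match f with
  | FAtom a => J (eval_atom s a)
  | FBot => False
  | FAnd f g => htsat J K s f /\ htsat J K s g
  | FOr f g => htsat J K s f \/ htsat J K s g
  | FImp f g => (~ htsat J K s f \/ htsat J K s g) /\ csat K s (FImp f g)
  | FAll x f => forall u, htsat J K (upd s x u) f /\ csat K (upd s x u) f
  | FEx x f => exists u, htsat J K (upd s x u) f
  end.

(** <I,J,K> |= Pi  (rule sentences are closed, so the assignment is immaterial) *)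
Definition htsat_prog (J K : gatom S U -> Prop) (P : program S) : Prop :=
  forall r, P r -> forall s : nat -> U, htsat J K s (rule_form r).

Definition subset (J K : gatom S U -> Prop) : Prop := forall a, J a -> K a.
Definition strict_subset (J K : gatom S U -> Prop) : Prop :=
  subset J K /\ exists a, K a /\ ~ J a.

Definition equilibrium (P : program S) (K : gatom S U -> Prop) : Prop :=
  htsat_prog K K P /\
  forall J, strict_subset J K -> ~ htsat_prog J K P.

End Semantics.

Definition injective {A B : Type} (f : A -> B) : Prop :=
  forall x y, f x = f y -> x = y.
Definition surjective {A B : Type} (f : A -> B) : Prop :=
  forall y, exists x, f x = y.

(** Open answer set <I,K>: an extended Herbrand interpretation, i.e. a
    (nonempty) universe U containing the constants of S (via the injection I,
    each constant interpreted as itself). *)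
Definition open_answer_set (S : signature) (P : program S)
    (U : Type) (I : Cst S -> U) (K : gatom S U -> Prop) : Prop :=
  inhabited U /\ injective I /\ equilibrium I P K.

(** Ordinary answer set: the universe is exactly the Herbrand universe H,
    i.e. the set of constants of S (I a bijection, identity up to renaming),
    or a single arbitrary element if S has no constants. *)
Definition herbrand_universe (S : signature) (U : Type) (I : Cst S -> U) : Prop :=
  (inhabited (Cst S) -> injective I /\ surjective I) /\
  (~ inhabited (Cst S) -> exists u0 : U, forall u : U, u = u0).

Definition ordinary_answer_set (S : signature) (P : program S)
    (U : Type) (I : Cst S -> U) (K : gatom S U -> Prop) : Prop :=
  herbrand_universe I /\ equilibrium I P K.

Record extension (L L' : signature) := mkExt {
  ec : Cst L -> Cst L';
  ep : Prd L -> Prd L';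
  ec_inj : injective ec;
  ep_inj : injective ep;
  ep_ar : forall p, @ar L' (ep p) = @ar L p }.

Section Translate.
Variables (L L' : signature) (X : extension L L').

Definition tr_term (t : term (Cst L)) : term (Cst L') :=
  match t with Var x => Var x | Con c => Con (ec X c) end.

Definition tr_atom (a : atom L) : atom L' :=
  @mkAtom L' (ep X (apred a)) (map tr_term (aargs a))
    (eq_trans (length_map _ _) (eq_trans (aok a) (eq_sym (ep_ar X (apred a))))).

Definition tr_rule (r : rule L) : rule L' :=
  mkRule (map tr_atom (hpos r)) (map tr_atom (hneg r))
         (map tr_atom (bpos r)) (map tr_atom (bneg r)).

Definition tr_prog (P : program L) : program L' :=
  fun r' => exists r, P r /\ r' = tr_rule r.
End Translate.

Definition unif_equiv_E (L : signature) (P1 P2 : program L) : Prop :=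
  forall (L' : signature) (X : extension L L') (F : program L'),
    is_factual F ->
    forall (U : Type) (I : Cst L' -> U) (K : gatom L' U -> Prop),
      open_answer_set (punion (tr_prog X P1) F) I K <->
      open_answer_set (punion (tr_prog X P2) F) I K.

Definition unif_equiv_H (L : signature) (P1 P2 : program L) : Prop :=
  forall (L' : signature) (X : extension L L') (F : program L'),
    is_factual F ->
    forall (U : Type) (I : Cst L' -> U) (K : gatom L' U -> Prop),
      ordinary_answer_set (punion (tr_prog X P1) F) I K <->
      ordinary_answer_set (punion (tr_prog X P2) F) I K.

(* Main.v *)
Require Import Defs.
From Stdlib Require Import List Classical ProofIrrelevance.
Import ListNotations.

Definition L2 (L' : signature) (U : Type) : signature := @mkSig U (Prd L') (@ar L').

Lemma gatom_ext (S : signature) (U : Type) (a b : gatom S U) :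
  gpred a = gpred b -> gargs a = gargs b -> a = b.
Proof.
  destruct a as [p1 a1 o1], b as [p2 a2 o2]; simpl; intros; subst.
  f_equal; apply proof_irrelevance.
Qed.

Lemma atom_ext (S : signature) (a b : atom S) :
  apred a = apred b -> aargs a = aargs b -> a = b.
Proof.
  destruct a as [p1 a1 o1], b as [p2 a2 o2]; simpl; intros; subst.
  f_equal; apply proof_irrelevance.
Qed.

Lemma flat_map_map' (A B C : Type) (f : B -> list C) (g : A -> B) (l : list A) :
  flat_map f (map g l) = flat_map (fun x => f (g x)) l.
Proof. induction l; simpl; [reflexivity | rewrite IHl; reflexivity]. Qed.

Section Transfer.
Variables (L' : signature) (U : Type) (I : Cst L' -> U) (Iinj : injective I).

Definition Yext : extension L' (L2 L' U) :=
  @mkExt L' (L2 L' U) I (fun p => p) Iinj (fun x y h => h) (fun p => eq_refl).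

Definition gconv (g : gatom L' U) : gatom (L2 L' U) U :=
  @mkGAtom (L2 L' U) U (gpred g) (gargs g) (gok g).
Definition gback (g : gatom (L2 L' U) U) : gatom L' U :=
  @mkGAtom L' U (gpred g) (gargs g) (gok g).

Lemma gback_gconv g : gback (gconv g) = g.
Proof. destruct g; reflexivity. Qed.
Lemma gconv_gback g : gconv (gback g) = g.
Proof. destruct g; reflexivity. Qed.

Definition idU : Cst (L2 L' U) -> U := fun u => u.

Lemma eval_tr s a :
  gback (@eval_atom (L2 L' U) U idU s (tr_atom Yext a)) = eval_atom I s a.
Proof.
  apply gatom_ext; simpl; [reflexivity|].
  rewrite map_map; apply map_ext; intros [x|c]; reflexivity.
Qed.

Fixpoint tr_form (f : form L') : form (L2 L' U) :=
  match f with
  | FAtom a => FAtom (tr_atom Yext a)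
  | FBot => FBot
  | FAnd f g => FAnd (tr_form f) (tr_form g)
  | FOr f g => FOr (tr_form f) (tr_form g)
  | FImp f g => FImp (tr_form f) (tr_form g)
  | FAll x f => FAll x (tr_form f)
  | FEx x f => FEx x (tr_form f)
  end.

Lemma ht_tr (J K : gatom L' U -> Prop) (J2 K2 : gatom (L2 L' U) U -> Prop) :
  (forall g, J2 g <-> J (gback g)) -> (forall g, K2 g <-> K (gback g)) ->
  forall f s, (csat I K s f <-> csat idU K2 s (tr_form f)) /\
              (htsat I J K s f <-> htsat idU J2 K2 s (tr_form f)).
Proof.
  intros HJ HK f; induction f; intros s; simpl.
  - rewrite HJ, HK, eval_tr; tauto.
  - tauto.
  - destruct (IHf1 s), (IHf2 s); tauto.
  - destruct (IHf1 s), (IHf2 s); tauto.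
  - destruct (IHf1 s), (IHf2 s); tauto.
  - split; split; intros H u; destruct (IHf (upd s x u)); firstorder.
  - split; split; intros [u H]; exists u; destruct (IHf (upd s x u)); tauto.
Qed.

Lemma tr_bigand l : tr_form (bigand l) = bigand (map tr_form l).
Proof.
  induction l as [|f l IH]; [reflexivity|].
  destruct l; [reflexivity|]. change (FAnd (tr_form f) (tr_form (bigand (f0 :: l))) =
    FAnd (tr_form f) (bigand (map tr_form (f0 :: l)))). rewrite IH; reflexivity.
Qed.
Lemma tr_bigor l : tr_form (bigor l) = bigor (map tr_form l).
Proof.
  induction l as [|f l IH]; [reflexivity|].
  destruct l; [reflexivity|]. change (FOr (tr_form f) (tr_form (bigor (f0 :: l))) =
    FOr (tr_form f) (bigor (map tr_form (f0 :: l)))). rewrite IH; reflexivity.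
Qed.

Lemma atom_vars_tr a : atom_vars (tr_atom Yext a) = atom_vars a.
Proof.
  unfold atom_vars; simpl. rewrite flat_map_map'.
  apply flat_map_ext; intros [x|c]; reflexivity.
Qed.

Lemma rule_vars_tr r : rule_vars (tr_rule Yext r) = rule_vars r.
Proof.
  unfold rule_vars; simpl. rewrite <- !map_app, flat_map_map'.
  apply flat_map_ext; intros; apply atom_vars_tr.
Qed.

Lemma fold_tr vs g :
  tr_form (fold_right (fun x f => FAll x f) g vs) =
  fold_right (fun x f => FAll x f) (tr_form g) vs.
Proof. induction vs; simpl; [reflexivity | rewrite IHvs; reflexivity]. Qed.

Lemma rule_form_tr r : rule_form (tr_rule Yext r) = tr_form (rule_form r).
Proof.
  unfold rule_form. rewrite rule_vars_tr, fold_tr. f_equal.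
  simpl. rewrite tr_bigand, tr_bigor, !map_app, !map_map. reflexivity.
Qed.

Variables (L : signature) (X : extension L L').

Definition Xext : extension L (L2 L' U) :=
  @mkExt L (L2 L' U) (fun c => I (ec X c)) (ep X)
    (fun x y h => @ec_inj _ _ X _ _ (Iinj _ _ h)) (@ep_inj _ _ X) (fun p => @ep_ar _ _ X p).

Lemma rule_eq r : tr_rule Xext r = tr_rule Yext (tr_rule X r).
Proof.
  unfold tr_rule; simpl.
  assert (HA : forall l, map (tr_atom Xext) l = map (tr_atom Yext) (map (tr_atom X) l)).
  { intros l; rewrite map_map; apply map_ext; intros a.
    apply atom_ext; simpl; [reflexivity|].
    rewrite map_map; apply map_ext; intros [x|c]; reflexivity. }
  rewrite !HA; reflexivity.
Qed.

Variables (P : program L) (F : program L').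

Lemma prog_tr (J K : gatom L' U -> Prop) (J2 K2 : gatom (L2 L' U) U -> Prop) :
  (forall g, J2 g <-> J (gback g)) -> (forall g, K2 g <-> K (gback g)) ->
  (htsat_prog I J K (punion (tr_prog X P) F) <->
   htsat_prog idU J2 K2 (punion (tr_prog Xext P) (tr_prog Yext F))).
Proof.
  intros HJ HK. split.
  - intros H r2 [[r [Hr ->]] | [f [Hf ->]]] s.
    + rewrite rule_eq, rule_form_tr. apply (proj2 (ht_tr _ _ _ _ HJ HK _ s)).
      apply H. left; exists r; auto.
    + rewrite rule_form_tr. apply (proj2 (ht_tr _ _ _ _ HJ HK _ s)).
      apply H. right; auto.
  - intros H r Hr s. apply (proj2 (ht_tr _ _ _ _ HJ HK _ s)). rewrite <- rule_form_tr.
    apply H. destruct Hr as [[r0 [Hr0 ->]] | Hf].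
    + left; exists r0; split; [auto | symmetry; apply rule_eq].
    + right; exists r; auto.
Qed.

Lemma equil_tr (K : gatom L' U -> Prop) :
  equilibrium I (punion (tr_prog X P) F) K <->
  equilibrium idU (punion (tr_prog Xext P) (tr_prog Yext F)) (fun g => K (gback g)).
Proof.
  split.
  - intros [Hs Hmin]. split.
    + apply (proj1 (prog_tr K K _ _ (fun g => iff_refl _) (fun g => iff_refl _))); auto.
    + intros J2 [Hsub [g [HKg HnJ]]] HJ2.
      apply (Hmin (fun g => J2 (gconv g))).
      * split.
        -- intros g' Hg'. apply Hsub in Hg'. rewrite gback_gconv in Hg'. exact Hg'.
        -- exists (gback g). split; [exact HKg|]. rewrite gconv_gback. exact HnJ.
      * apply (proj2 (prog_tr (fun g => J2 (gconv g)) K J2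
                (fun g => K (gback g)) ltac:(intros g'; cbv beta; rewrite gconv_gback; tauto)
                (fun g => iff_refl _))). exact HJ2.
  - intros [Hs Hmin]. split.
    + apply (proj2 (prog_tr K K _ _ (fun g => iff_refl _) (fun g => iff_refl _))); auto.
    + intros J [Hsub [g [HKg HnJ]]] HJ.
      apply (Hmin (fun g => J (gback g))).
      * split.
        -- intros g' Hg'. apply Hsub. exact Hg'.
        -- exists (gconv g). rewrite gback_gconv. auto.
      * apply (proj1 (prog_tr J K (fun g => J (gback g))
                (fun g => K (gback g)) (fun g => iff_refl _) (fun g => iff_refl _))).
        exact HJ.
Qed.

End Transfer.

Lemma factual_tr (L' L'' : signature) (Y : extension L' L'') (F : program L') :
  is_factual F -> is_factual (tr_prog Y F).
Proof.
  intros HF r [f [Hf ->]]. destruct (HF f Hf) as [Hr [Hb1 Hb2]].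
  split; [unfold is_rule in *; simpl; rewrite !length_map; exact Hr|].
  simpl; rewrite Hb1, Hb2; auto.
Qed.

Lemma one_dir (L : signature) (P1 P2 : program L) :
  unif_equiv_H P1 P2 ->
  forall (L' : signature) (X : extension L L') (F : program L'),
    is_factual F ->
    forall (U : Type) (I : Cst L' -> U) (K : gatom L' U -> Prop),
      open_answer_set (punion (tr_prog X P1) F) I K ->
      open_answer_set (punion (tr_prog X P2) F) I K.
Proof.
  intros HH L' X F HF U I K [Hinh [Hinj Heq]].
  split; [exact Hinh|]. split; [exact Hinj|].
  apply (proj2 (@equil_tr L' U I Hinj L X P2 F K)).
  assert (Hhu : herbrand_universe (idU L' U)).
  { split.
    - intros _; split; [intros x y h; exact h | intros y; exists y; reflexivity].
    - intros Hn; exfalso; apply Hn; destruct Hinh as [u]; constructor; exact u. }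
  refine (proj2 (proj1 (HH (L2 L' U) (@Xext L' U I Hinj L X) (tr_prog (@Yext L' U I Hinj) F)
    (@factual_tr _ _ (@Yext L' U I Hinj) F HF) U (idU L' U) (fun g => K (@gback L' U g))) _)).
  split; [exact Hhu|]. apply (proj1 (@equil_tr L' U I Hinj L X P1 F K)). exact Heq.
Qed.

Lemma herb_open (S : signature) (U : Type) (I : Cst S -> U) :
  herbrand_universe I -> inhabited U /\ injective I.
Proof.
  intros [h1 h2]. destruct (classic (inhabited (Cst S))) as [Hi|Hn].
  - destruct (h1 Hi) as [Hinj _]. destruct Hi as [c]. split; [exact (inhabits (I c))|auto].
  - destruct (h2 Hn) as [u0 _]. split; [constructor; exact u0|].
    intros x; exfalso; apply Hn; constructor; exact x.
Qed.

Theorem mainTheorem19 (L : signature) (P1 P2 : program L)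
  (H1 : is_program P1) (H2 : is_program P2) :
  unif_equiv_E P1 P2 <-> unif_equiv_H P1 P2.
Proof.
  split.
  - intros HE L' X F HF U I K. specialize (HE L' X F HF U I K).
    split; intros [Hh Heq]; destruct (herb_open _ _ _ Hh) as [Hi Hj]; split; auto.
    + exact (proj2 (proj2 (proj1 HE (conj Hi (conj Hj Heq))))).
    + exact (proj2 (proj2 (proj2 HE (conj Hi (conj Hj Heq))))).
  - intros HH L' X F HF U I K. split; apply (@one_dir L); auto.
    intros L'' X' F' HF' U' I' K'. symmetry. apply HH; auto.
Qed.
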